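(* Let $\mathcal{F}=(f_1,\dots,f_M)$ be a random frame of $\mathbb{R}^N$ whose vectors are i.i.d. Gaussian vectors in $\mathbb{R}^N$ (distribution $\mathcal{N}(0,I_N)$), organized into $K$ disjoint pools $I_1,\dots,I_K$ (disjoint, union $\{1,\dots,M\}$) each of size $L$. Let the Maxout operator be $MO(x)=\big(\max_{j\in I_k}\langle x,f_j\rangle\big)_{k=1}^K$. Then, with probability $1$, $MO$ is injective on $\mathbb{R}^N$ if $K\ge 2N+1$. *)

(* Defs.v *)
From HB Require Import structures.
From mathcomp Require Import all_boot all_order all_algebra.
From mathcomp Require Import all_classical all_reals all_analysis.
Set Implicit Arguments. Unset Strict Implicit. Unset Printing Implicit Defensive.
Import Order.TTheory GRing.Theory Num.Theory.
Local Open Scope classical_set_scope.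
Local Open Scope ring_scope.

(* Mutual independence of a finite family of real random variables:
   product rule for every family of Borel sets (taking B i = setT recovers
   every subfamily). *)
Definition mutually_independent d (T : measurableType d) (R : realType)
  (P : probability T R) (I : finType) (X : I -> {RV P >-> R}) : Prop :=
  forall B : I -> set R, (forall i, measurable (B i)) ->
    P (\bigcap_(i in [set: I]) (X i @^-1` B i)) =
    (\big[*%E/1%E]_(i : I) P (X i @^-1` B i))%E.

Definition std_normal d (T : measurableType d) (R : realType)
  (P : probability T R) (X : {RV P >-> R}) : Prop :=
  forall A : set R, measurable A -> distribution P X A = normal_prob 0 1 A.

Definition inner (R : realType) (N : nat) (x y : 'I_N -> R) : R :=
  \sum_(i < N) x i * y i.

Definition fmax (R : realType) (T : finType) (A : {set T}) (v : T -> R) : R :=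
  fine (\big[Order.max/-oo%E]_(j in A) (v j)%:E).

Definition maxout (R : realType) (N M K : nat) (pools : 'I_K -> {set 'I_M})
  (f : 'I_M -> 'I_N -> R) (x : 'I_N -> R) : 'I_K -> R :=
  fun k => fmax (pools k) (fun j => inner x (f j)).

(* Main.v *)
Require Import Defs.
From HB Require Import structures.
From mathcomp Require Import all_boot all_order all_algebra.
From mathcomp Require Import all_classical all_reals all_analysis.
From mathcomp Require Import measurable_realfun.
From mathcomp Require Import ring lra.
Import Order.TTheory GRing.Theory Num.Theory.
Local Open Scope classical_set_scope.
Local Open Scope ring_scope.
Set Implicit Arguments. Unset Strict Implicit. Unset Printing Implicit Defensive.

Section Indep.
Context (R : realType) d (T : measurableType d) (P : probability T R)
  (V : finType) (X : V -> {RV P >-> R}).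

Definition Gen (v : V) : set (set T) :=
  [set E | exists C : V -> set R, [/\ (forall w, measurable (C w)), C v = setT &
     E = \bigcap_(w in [set: V]) (X w @^-1` C w)]].

Lemma Gen_meas v : Gen v `<=` measurable.
Proof.
move=> _ [C [mC _ ->]]; apply: fin_bigcap_measurable; first exact: finite_finset.
by move=> w _; exact: measurable_funPTI.
Qed.

Lemma Gen_setI v : setI_closed (Gen v).
Proof.
move=> _ _ [C1 [mC1 C1v ->]] [C2 [mC2 C2v ->]].
exists (fun w => C1 w `&` C2 w); split.
- by move=> w; exact: measurableI.
- by rewrite C1v C2v setIT.
- apply/seteqP; split => x /=.
  + by move=> [H1 H2] w _; split; [exact: H1|exact: H2].
  + by move=> H; split => w _; have [] := H w I.
Qed.

Lemma Gen_T v : Gen v setT.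
Proof.
exists (fun=> setT); split => //.
by apply/seteqP; split => x //= _ w _.
Qed.

Lemma Gen_X v w (B : set R) : w != v -> measurable B -> Gen v (X w @^-1` B).
Proof.
move=> wv mB; exists (fun u => if u == w then B else setT); split.
- by move=> u; case: ifP.
- by rewrite eq_sym (negbTE wv).
- apply/seteqP; split => x /=.
  + by move=> Bx u _; case: ifP => // /eqP ->.
  + by move=> H; have := H w I; rewrite eqxx.
Qed.

Hypothesis indX : mutually_independent X.

Lemma indep_ext v (B : set R) : measurable B ->
  forall E, <<s Gen v >> E ->
  P (X v @^-1` B `&` E) = (P (X v @^-1` B) * P E)%E.
Proof.
move=> mB.
have mXB : measurable (X v @^-1` B) by exact: measurable_funPTI.
have c0 : (0 <= fine (P (X v @^-1` B)))%R by apply: fine_ge0.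
pose c : {nonneg R} := NngNum c0.
have cE : (c%:num)%:E = P (X v @^-1` B).
  by rewrite /= fineK // fin_num_measure.
move=> E sE.
have := @g_sigma_algebra_measure_unique _ _ _ (Gen v) (@Gen_meas v) (fun=> setT)
  (fun=> @Gen_T v) _ (mrestr P mXB) (mscale c P) (@Gen_setI v) _ _ E sE.
move=> H; rewrite setIC -cE; apply: H.
- by apply/seteqP; split => // x _; exists 0%N.
- move=> _ [C [mC Cv ->]].
  change (P (\bigcap_w X w @^-1` C w `&` X v @^-1` B) = (c%:num)%:E * P (\bigcap_w X w @^-1` C w))%E.
  rewrite cE setIC.
  have -> : X v @^-1` B `&` \bigcap_(w in [set: V]) X w @^-1` C w =
     \bigcap_(w in [set: V]) X w @^-1` (if w == v then B else C w).
    apply/seteqP; split => x /=.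
    + by move=> [Bx H] w _; case: ifP => [/eqP ->|_] //; exact: H.
    + move=> H; split; first by have := H v I; rewrite eqxx.
      move=> w _; have := H w I; case: ifP => [/eqP ->|//].
      by rewrite Cv.
  rewrite indX; last by move=> w; case: ifP.
  rewrite indX // (bigD1 v) //= eqxx [in RHS](bigD1 v) //= Cv preimage_setT probability_setT mul1e.
  rewrite (eq_bigr (fun i => P (X i @^-1` C i))) //.
  by move=> w /negbTE ->.
- by move=> _; rewrite /mrestr /= -ge0_fin_numE ?fin_num_measure.
Qed.

End Indep.

Lemma measurable_inv (R : realType) : measurable_fun (setT : set R) GRing.inv.
Proof.
have -> : (setT : set R) = [set 0] `|` ~` [set 0].
  apply/seteqP; split => x // _.
  by have [->|x0] := eqVneq x 0; [left|right => /= x0'; rewrite x0' eqxx in x0].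
apply/measurable_funU => //; first exact: measurableC.
split; first exact: measurable_fun_set1.
apply: open_continuous_measurable_fun; first by rewrite openC; exact: closed_eq.
move=> x; rewrite inE => /eqP x0; exact: inv_continuous.
Qed.

Section GTsec.
Context (R : realType) d (T : measurableType d) (P : probability T R)
  (V : finType) (X : V -> {RV P >-> R}).

Local Notation GT v := (g_sigma_algebraType (Gen X v)).

Definition gmeas v (h : T -> R) := measurable_fun (T := GT v) setT h.

Lemma gmeas_X v w : w != v -> gmeas v (X w).
Proof.
move=> wv _ Y mY; rewrite setTI; apply: sub_sigma_algebra; exact: Gen_X.
Qed.

Lemma gmeas_cst v (c : R) : gmeas v (fun=> c).
Proof. exact: measurable_cst. Qed.

Lemma gmeasD v f g : gmeas v f -> gmeas v g -> gmeas v (fun x => f x + g x).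
Proof. exact: measurable_funD. Qed.

Lemma gmeasM v f g : gmeas v f -> gmeas v g -> gmeas v (fun x => f x * g x).
Proof. exact: measurable_funM. Qed.

Lemma gmeasN v f : gmeas v f -> gmeas v (fun x => - f x).
Proof. exact: measurable_funN. Qed.

Lemma gmeas_comp v (phi : R -> R) f : measurable_fun setT phi -> gmeas v f ->
  gmeas v (phi \o f).
Proof. move=> mphi mf; exact: measurableT_comp mphi mf. Qed.

Lemma gmeasV v f : gmeas v f -> gmeas v (fun x => (f x)^-1).
Proof. move=> mf; exact: (gmeas_comp (@measurable_inv R) mf). Qed.

Lemma gmeas_T v h : gmeas v h -> measurable_fun (T := T) setT h.
Proof.
move=> mh _ Y mY; have H : <<s Gen X v >> ([set: T] `&` h @^-1` Y) := mh measurableT Y mY.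
have K := smallest_sub (sigma_algebra_measurable T) (@Gen_meas _ _ _ _ _ X v).
exact: K.
Qed.

Lemma gmeas_sub v h (B : set R) : gmeas v h -> measurable B -> <<s Gen X v >> (h @^-1` B).
Proof. by move=> mh mB; have := mh measurableT B mB; rewrite setTI. Qed.

End GTsec.

Section Floor.
Context (R : realType).

Definition J (e : R) (k : nat) : set R :=
  [set` `[k%:R * e, (k%:R + 1) * e[] `|` [set` `[- k%:R * e, (1 - k%:R) * e[].

Lemma J_meas e k : measurable (J e k).
Proof. by apply: measurableU; exact: measurable_itv. Qed.

Lemma Jfloor e k x : 0 < e -> J e k x -> `|Num.floor (x / e)|%N = k.
Proof.
move=> e0 [|]; rewrite /= in_itv /= => /andP [h1 h2].
- have -> : Num.floor (x / e) = k%:Z; last by [].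
  apply: floor_def; rewrite intrD /=.
  by rewrite ler_pdivlMr // ltr_pdivrMr // h1 h2.
- have -> : Num.floor (x / e) = - k%:Z; last by rewrite abszN.
  apply: floor_def; rewrite intrD intrN /=.
  rewrite ler_pdivlMr // ltr_pdivrMr // h1 /=.
  by rewrite addrC; exact: h2.
Qed.

Lemma Jcover e x : 0 < e -> J e `|Num.floor (x / e)|%N x.
Proof.
move=> e0; have /andP [h1 h2] := floor_itv (x / e).
move: h1 h2; rewrite intrD.
set z := Num.floor (x / e) => h1 h2.
have [z0|z0] := leP 0 z.
- left; rewrite /= in_itv /=.
  have zE : (`|z|%N%:R : R) = z%:~R by rewrite -[in RHS](gez0_abs z0).
  by rewrite zE -ler_pdivlMr // -ltr_pdivrMr // h1.
- right; rewrite /= in_itv /=.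
  have zE : (`|z|%N%:R : R) = - z%:~R.
    by rewrite -intrN -(ltz0_abs z0).
  by rewrite zE opprK -ler_pdivlMr // -ltr_pdivrMr // h1 /= addrC.
Qed.

End Floor.

Lemma normal_le (R : realType) (A : set R) : measurable A ->
  (normal_prob 0 1 A <= (normal_peak (1:R))%:E * lebesgue_measure A)%E.
Proof.
move=> mA; rewrite /normal_prob.
apply: (@le_trans _ _ (\int[lebesgue_measure]_(x in A) (normal_peak (1:R))%:E))%E.
  apply: ge0_le_integral => //=.
  - by move=> x _; rewrite lee_fin normal_pdf_ge0.
  - apply/measurable_EFinP; apply: measurable_funTS; exact: measurable_normal_pdf.
  - by move=> x _; rewrite lee_fin normal_pdf_ub // oner_neq0.
by rewrite integral_cst.
Qed.

Lemma leb_J (R : realType) (e : R) k : 0 < e -> (lebesgue_measure (J e k) <= (e + e)%:E)%E.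
Proof.
move=> e0; apply: le_trans (measureU2 lebesgue_measure (measurable_itv _) (measurable_itv _)) _.
rewrite [X in (X + _)%E]lebesgue_measure_itv [X in (_ + X)%E]lebesgue_measure_itv /= !lte_fin. have ee : (0 <= e) by exact: ltW.
by do 2 case: ifP => _; rewrite -?EFinD ?add0e ?adde0 ?lee_fin; nra.
Qed.

Section LemmaA.
Context (R : realType) d (T : measurableType d) (P : probability T R)
  (V : finType) (X : V -> {RV P >-> R}).
Hypothesis indX : mutually_independent X.
Hypothesis gX : forall v, std_normal (X v).

Lemma lemA v (h : T -> R) : gmeas X v h -> P.-negligible [set w | X v w = h w].
Proof.
move=> mh.
set N0 := [set w | X v w = h w].
have mhT := gmeas_T mh.
have mN0 : measurable N0.
  have H := measurable_fun_eqr (measurable_funPT (X v)) mhT measurableT (Y := [set true]) I.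
  rewrite setTI in H.
  rewrite (_ : N0 = (fun w => X v w == h w) @^-1` [set true]) //.
  apply/seteqP; split => w; rewrite /N0 /preimage /=.
    by move=> Hw; apply/eqP.
  by move/eqP.
exists N0; split => //.
set c := normal_peak (1:R).
have c0 : 0 <= c by exact: normal_peak_ge0.
have key : forall n : nat, (P N0 <= ((c + c) / n.+1%:R)%:E)%E.
  move=> n; set e := (n.+1%:R)^-1 : R.
  have e0 : 0 < e by rewrite invr_gt0.
  pose F k := X v @^-1` J e k `&` h @^-1` J e k.
  have mF k : measurable (F k).
    apply: measurableI; first exact: measurable_funPTI (J_meas _ _).
    by have := mhT measurableT _ (J_meas e k); rewrite setTI.
  apply: le_trans (measure_sigma_subadditive P mF mN0 _) _.
    move=> w /= Nw; exists `|Num.floor (X v w / e)|%N => //.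
    by split => /=; [|rewrite -Nw]; exact: Jcover.
  apply: le_trans (@lee_nneseries R (fun k => P (F k)) (fun k => ((c + c) * e)%:E * P (h @^-1` J e k))%E xpredT 0%N _ _) _.
  - by move=> k _ _; exact: measure_ge0.
  - move=> k _; rewrite /F (indep_ext indX (J_meas e k) (gmeas_sub mh (J_meas e k))).
      apply: lee_wpmul2r => //.
      have := gX v (J_meas e k); rewrite /distribution /pushforward => ->.
      apply: le_trans (normal_le (J_meas e k)) _.
      have -> : (c + c) * e = c * (e + e) by ring.
      by rewrite EFinM; apply: lee_wpmul2l; [rewrite lee_fin|exact: leb_J].
  rewrite nneseriesZl; last by move=> k _; exact: measure_ge0.
  have mhJ k : measurable (h @^-1` J e k).
    by have := mhT measurableT _ (J_meas e k); rewrite setTI.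
  rewrite -measure_semi_bigcup //.
  - rewrite -[X in (_ <= X)%E]mule1; apply: lee_wpmul2l.
      by rewrite lee_fin mulr_ge0 // ?addr_ge0 // ltW.
    by apply: probability_le1; exact: bigcupT_measurable.
  - move=> i j _ _ [w [/= hi hj]].
    by rewrite -(Jfloor e0 hi) -(Jfloor e0 hj).
  - exact: bigcupT_measurable.
have PN0 := fineK (fin_num_measure P N0 mN0).
set r := fine (P N0) in PN0.
have r0 : 0 <= r by rewrite -lee_fin PN0 measure_ge0.
apply/eqP; rewrite -PN0 eqe; apply/negPn/negP => rn0.
have rp : 0 < r by rewrite lt_def rn0.
set m := Num.trunc ((c + c) / r).
have := key m; rewrite -PN0 lee_fin ler_pdivlMr // => H.
have := truncnS_gt ((c + c) / r); rewrite -/m ltr_pdivrMr // => H2.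
have : r * m.+1%:R < r * m.+1%:R.
  apply: le_lt_trans H _; by rewrite mulrC.
by rewrite ltxx.
Qed.
End LemmaA.

Section MA.
Context (R : realType) (V : finType).
Implicit Types (z : V -> R) (F : (V -> R) -> R) (S : {set V}).

Definition upd z v (t : R) : V -> R := fun w => if w == v then t else z w.

Lemma upd_id z v : upd z v (z v) = z.
Proof. by apply/funext => w; rewrite /upd; case: eqP => [->|]. Qed.

Lemma upd_upd z v s t : upd (upd z v s) v t = upd z v t.
Proof. by apply/funext => w; rewrite /upd; case: eqP. Qed.

Lemma upd_comm z v w s t : v != w -> upd (upd z v s) w t = upd (upd z w t) v s.
Proof.
move=> vw; apply/funext => u; rewrite /upd.
have [uw|uw] := eqVneq u w; have [uv|uv] := eqVneq u v => //.
by move: vw; rewrite -uw -uv eqxx.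
Qed.

Definition affv F v := forall z t,
  F (upd z v t) = F (upd z v 0) + t * (F (upd z v 1) - F (upd z v 0)).

Definition depS F S := forall z z', (forall w, w \in S -> z w = z' w) -> F z = F z'.

Definition MA S F := depS F S /\ forall v, affv F v.

Definition alphaF F v z := F (upd z v 1) - F (upd z v 0).
Definition betaF F v z := F (upd z v 0).

Lemma MA_decomp S F v : MA S F -> forall z, F z = betaF F v z + z v * alphaF F v z.
Proof.
move=> [_ aff] z; rewrite -{1}(upd_id z v) aff //.
Qed.

Lemma MA_alpha S F v : MA S F -> MA (S :\ v) (alphaF F v).
Proof.
move=> [dep aff]; split.
  move=> z z' H; rewrite /alphaF; congr (_ - _); apply: dep => w wS;
  rewrite /upd; case: eqP => // /eqP wv; apply: H; by rewrite !inE wv.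
move=> w z t; rewrite /alphaF.
have [->|wv] := eqVneq w v.
  by rewrite !upd_upd subrr mulr0 addr0.
rewrite !(upd_comm _ _ _ wv) (aff w (upd z v 1)) (aff w (upd z v 0)); ring.
Qed.

Lemma MA_beta S F v : MA S F -> MA (S :\ v) (betaF F v).
Proof.
move=> [dep aff]; split.
  move=> z z' H; rewrite /betaF; apply: dep => w wS;
  rewrite /upd; case: eqP => // /eqP wv; apply: H; by rewrite !inE wv.
move=> w z t; rewrite /betaF.
have [->|wv] := eqVneq w v.
  by rewrite !upd_upd subrr mulr0 addr0.
by rewrite !(upd_comm _ _ _ wv) (aff w (upd z v 0)).
Qed.

Lemma MA0 F : MA (finset.set0 : {set V}) F -> forall z, F z = F (fun=> 0).
Proof. by move=> [dep _] z; apply: dep => w; rewrite inE. Qed.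

End MA.

Section MAprob.
Context (R : realType) d (T : measurableType d) (P : probability T R)
  (V : finType) (X : V -> {RV P >-> R}).
Hypothesis indX : mutually_independent X.
Hypothesis gX : forall v, std_normal (X v).

Definition xpt (w : T) : V -> R := fun v => X v w.

Lemma MA_gmeas n : forall (S : {set V}) (F : (V -> R) -> R) (v : V), #|S| = n -> MA S F -> v \notin S ->
  gmeas X v (fun w => F (xpt w)).
Proof.
elim: n => [|n IH] S F v cS HF vS.
  move: cS => /eqP; rewrite cards_eq0 => /eqP S0; subst S.
  have -> : (fun w => F (xpt w)) = fun=> F (fun=> 0).
    by apply/funext => w; exact: MA0.
  exact: gmeas_cst.
have [u uS] : exists u, u \in S.
  by apply/set0Pn; rewrite -card_gt0 cS.
have -> : (fun w => F (xpt w)) =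
  (fun w => betaF F u (xpt w) + X u w * alphaF F u (xpt w)).
  by apply/funext => w; rewrite (MA_decomp u HF).
have cS' : #|S :\ u| = n by rewrite (cardsD1 u S) uS in cS; case: cS.
have vS' : v \notin S :\ u by rewrite !inE negb_and vS orbT.
apply: gmeasD; first exact: (IH _ _ _ cS' (MA_beta u HF) vS').
apply: gmeasM; last exact: (IH _ _ _ cS' (MA_alpha u HF) vS').
apply: gmeas_X; apply/eqP => uv; move: vS; by rewrite -uv uS.
Qed.

Lemma MA_null n : forall (S : {set V}) (F : (V -> R) -> R), #|S| = n -> MA S F -> (exists z, F z != 0) ->
  P.-negligible [set w | F (xpt w) = 0].
Proof.
elim: n => [|n IH] S F cS HF [z0 Fz0].
  move: cS => /eqP; rewrite cards_eq0 => /eqP S0; subst S.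
  apply: (negligibleS _ (negligible_set0 P)) => w /=.
  by rewrite (MA0 HF) -(MA0 HF z0) => /eqP; rewrite (negbTE Fz0).
have [u uS] : exists u, u \in S.
  by apply/set0Pn; rewrite -card_gt0 cS.
have cS' : #|S :\ u| = n by rewrite (cardsD1 u S) uS in cS; case: cS.
have uS' : u \notin S :\ u by rewrite !inE eqxx.
have Ha := MA_alpha u HF; have Hb := MA_beta u HF.
have [[z1 az1]|anz] := pselect (exists z, alphaF F u z != 0).
  apply: (negligibleS _ (negligibleU (IH _ _ cS' Ha (ex_intro _ z1 az1))
    (lemA indX gX (v := u) (h := fun w => - betaF F u (xpt w) * (alphaF F u (xpt w))^-1) _))).
    move=> w /=; rewrite (MA_decomp u HF) => H0.
    have [a0|a0] := eqVneq (alphaF F u (xpt w)) 0; first by left.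
    right; rewrite /xpt in H0 a0 *.
    move: H0 a0; set a := alphaF _ _ _; set b := betaF _ _ _; set x := X u w => H0 a0.
    apply: (mulIf a0); rewrite mulfVK //.
    have : x * a = - b by lra.
    by [].
  apply: (gmeasM (f := fun w => - betaF F u (xpt w)) (g := fun w => (alphaF F u (xpt w))^-1)).
    have H1 := MA_gmeas cS' Hb uS'.
    exact: (gmeasN H1).
  exact: (gmeasV (MA_gmeas cS' Ha uS')).
have aE z : alphaF F u z = 0.
  have [//|az] := eqVneq (alphaF F u z) 0.
  by exfalso; apply: anz; exists z.
have -> : [set w | F (xpt w) = 0] = [set w | betaF F u (xpt w) = 0].
  by apply/seteqP; split => w /=; rewrite (MA_decomp u HF) aE mulr0 addr0.
apply: (IH _ _ cS' Hb).
by exists z0; move: Fz0; rewrite (MA_decomp u HF) aE mulr0 addr0.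
Qed.

End MAprob.

Section DetMA.
Context (R : realType) (V : finType).

Lemma cofactor_rows n (A B : 'M[R]_n) i j :
  (forall t k, t != i -> A t k = B t k) -> cofactor A i j = cofactor B i j.
Proof.
move=> H; rewrite /cofactor; congr (_ * \det _).
apply/matrixP => a b; rewrite !mxE; apply: H; by rewrite eq_sym neq_lift.
Qed.

Lemma det_MA n (own : V -> option 'I_n) (E : 'I_n -> 'I_n -> (V -> R) -> R) :
  (forall t j z z', (forall v, own v = Some t -> z v = z' v) -> E t j z = E t j z') ->
  (forall t j v, affv (E t j) v) ->
  MA [set: V] (fun z => \det (\matrix_(t, j) E t j z)).
Proof.
move=> Edep Eaff; split.
  move=> z z' H; congr (\det _); apply/matrixP => t j; rewrite !mxE.
  by apply: Edep => v _; apply: H; rewrite inE.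
move=> v z s.
case Hv: (own v) => [t0|].
- have rowE s' t j : t != t0 -> E t j (upd z v s') = E t j z.
    move=> tt0; apply: Edep => w Hw; rewrite /upd; case: eqP => // wv.
    by move: Hw; rewrite wv Hv => -[/eqP]; rewrite eq_sym (negbTE tt0).
  have cofE s' j : cofactor (\matrix_(t, j) E t j (upd z v s')) t0 j =
                   cofactor (\matrix_(t, j) E t j z) t0 j.
    by apply: cofactor_rows => t k tt0; rewrite !mxE rowE.
  have detE s' : \det (\matrix_(t, j) E t j (upd z v s')) =
      \sum_j E t0 j (upd z v s') * cofactor (\matrix_(t, j) E t j z) t0 j.
    by rewrite (expand_det_row _ t0); apply: eq_bigr => j _; rewrite cofE mxE.
  rewrite !detE; under eq_bigr do rewrite Eaff.
  rewrite -sumrB mulr_sumr -big_split /=; apply: eq_bigr => j _.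
  ring.
- have rowE s' t j : E t j (upd z v s') = E t j z.
    apply: Edep => w Hw; rewrite /upd; case: eqP => // wv.
    by move: Hw; rewrite wv Hv.
  have AE s' : \matrix_(t, j) E t j (upd z v s') = \matrix_(t, j) E t j z.
    by apply/matrixP => t j; rewrite !mxE rowE.
  by rewrite !AE subrr mulr0 addr0.
Qed.

Lemma det0_kernel n (A : 'M[R]_n) (w : 'rV[R]_n) : w != 0 ->
  (forall t, \sum_j A t j * w 0 j = 0) -> \det A = 0.
Proof.
move=> w0 H; rewrite -det_tr; apply/eqP/det0P; exists w => //.
apply/matrixP => i t; rewrite !mxE (ord1 i) -[RHS](H t).
apply: congr_big => // j _; by rewrite [A^T j t]mxE mulrC.
Qed.

Lemma det_neq0_kernel n (A : 'M[R]_n) :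
  (forall w : 'rV[R]_n, (forall t, \sum_j A t j * w 0 j = 0) -> w = 0) -> \det A != 0.
Proof.
move=> H; rewrite -det_tr; apply/det0P => -[w w0 wA]; move/eqP: w0; apply.
apply: H => t; have := congr1 (fun M : 'rV_n => M 0 t) wA; rewrite !mxE => Ht; rewrite -[RHS]Ht.
apply: eq_bigr => j _; by rewrite [A^T j t]mxE mulrC.
Qed.

End DetMA.

Section Comb.
Context (R : realType) (N M K : nat) (pools : 'I_K -> {set 'I_M}).
Hypothesis disj : forall (k k' : 'I_K) (j : 'I_M), j \in pools k -> j \in pools k' -> k = k'.
Hypothesis NK : (N + N <= K)%N.
Variable c : 'I_K -> 'I_M * 'I_M.
Hypothesis cval : forall k, ((c k).1 \in pools k) && ((c k).2 \in pools k).

Local Notation V := ('I_M * 'I_N)%type.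

Definition io (t : 'I_(N + N)) : 'I_K := widen_ord NK t.
Definition ca t := (c (io t)).1.
Definition cb t := (c (io t)).2.

Lemma io_inj : injective io.
Proof. by move=> t t' /(congr1 val) /= /val_inj. Qed.

Lemma ca_pool t : ca t \in pools (io t).
Proof. by have /andP[] := cval (io t). Qed.

Lemma cb_pool t : cb t \in pools (io t).
Proof. by have /andP[] := cval (io t). Qed.

Lemma pool_row t t' m : m \in pools (io t) -> m \in pools (io t') -> t = t'.
Proof. by move=> h h'; apply: io_inj; exact: disj h h'. Qed.

Definition Sc : {set 'I_(N + N)} := [set t : 'I_(N + N) | ca t == cb t]%SET.

Definition own2 (v : V) : option 'I_(N + N) := [pick t | v.1 \in pools (io t)].

Lemma own2_eq t m i : m \in pools (io t) -> own2 (m, i) = Some t.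
Proof.
move=> h; rewrite /own2; case: pickP => [t' /= ht'|H]; last by rewrite H in h.
by congr Some; exact: pool_row ht' h.
Qed.

Definition E2 (t j : 'I_(N + N)) (z : V -> R) : R :=
  match fintype.split j with inl i => z (ca t, i) | inr i => - z (cb t, i) end.

Definition D2 (z : V -> R) := \det (\matrix_(t, j) E2 t j z).

Lemma MA_D2 : MA [set: V] D2.
Proof.
apply: (det_MA (own := own2)).
- move=> t j z z' H; rewrite /E2; case: fintype.split => i.
    by apply: H; apply: own2_eq; exact: ca_pool.
  by congr (- _); apply: H; apply: own2_eq; exact: cb_pool.
- move=> t j v z s; rewrite /E2 /upd; case: fintype.split => i.
    by case: (_ == v); ring.
  by case: (_ == v); ring.
Qed.

Definition rho (r : 'I_N) : 'I_(N + N) := nth (lshift N r) (enum Sc) r.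

Definition E1 (r j : 'I_N) (z : V -> R) : R := z (ca (rho r), j).
Definition D1 (z : V -> R) := \det (\matrix_(r, j) E1 r j z).

Section case1.
Hypothesis hNS : (N <= #|Sc|)%N.

Lemma rho_S r : rho r \in Sc.
Proof.
rewrite /rho -mem_enum; apply: mem_nth; rewrite -cardE.
exact: leq_trans (ltn_ord r) hNS.
Qed.

Lemma rho_inj : injective rho.
Proof.
move=> r r'; rewrite /rho.
have hr : (r < size (enum Sc))%N by rewrite -cardE (leq_trans (ltn_ord r) hNS).
have hr' : (r' < size (enum Sc))%N by rewrite -cardE (leq_trans (ltn_ord r') hNS).
rewrite (set_nth_default (lshift N r) (lshift N r') hr') => /eqP.
by rewrite nth_uniq // ?enum_uniq // => /eqP /val_inj.
Qed.

Definition own1 (v : V) : option 'I_N := [pick r | v.1 \in pools (io (rho r))].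

Lemma own1_eq r m i : m \in pools (io (rho r)) -> own1 (m, i) = Some r.
Proof.
move=> h; rewrite /own1; case: pickP => [r' /= hr'|H]; last by rewrite H in h.
by congr Some; apply: rho_inj; exact: pool_row hr' h.
Qed.

Lemma MA_D1 : MA [set: V] D1.
Proof.
apply: (det_MA (own := own1)).
- move=> r j z z' H; rewrite /E1; apply: H; apply: own1_eq; exact: ca_pool.
- move=> r j v z s; rewrite /E1 /upd.
  by case: (_ == v); ring.
Qed.

Definition z1 (v : V) : R :=
  if [pick r | v.1 == ca (rho r)] is Some r then ((r : nat) == v.2)%:R else 0.

Lemma D1_z1 : D1 z1 = 1.
Proof.
rewrite /D1 -(det1 R N); congr (\det _); apply/matrixP => r j; rewrite !mxE /E1 /z1 /=.
case: pickP => [r' /eqP hr'|H]; last by have := H r; rewrite eqxx.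
have -> : r' = r.
  apply: rho_inj; apply: (@pool_row _ _ (ca (rho r))); last exact: ca_pool.
  by rewrite hr'; exact: ca_pool.
by [].
Qed.

End case1.

Lemma split_l (i : 'I_N) : fintype.split (lshift N i) = inl i.
Proof. exact: (unsplitK (inl i)). Qed.
Lemma split_r (i : 'I_N) : fintype.split (rshift N i) = inr i.
Proof. exact: (unsplitK (inr i)). Qed.

Lemma sum_delta (k : 'I_N) (x : 'I_N -> R) : \sum_(i < N) (((k : nat) == i)%:R * x i) = x k.
Proof.
rewrite (bigD1 k) //= eqxx mul1r big1 ?addr0 // => i ik.
have -> : ((k : nat) == i) = false by apply/negbTE; rewrite eq_sym.
by rewrite mul0r.
Qed.

Lemma rowsum (z : V -> R) t (w : 'rV[R]_(N + N)) : \sum_j E2 t j z * w 0 j =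
  \sum_i z (ca t, i) * w 0 (lshift N i) + \sum_i (- z (cb t, i)) * w 0 (rshift N i).
Proof.
rewrite big_split_ord /=; congr (_ + _); apply: eq_bigr => i _;
by rewrite /E2 ?split_l ?split_r.
Qed.

Section case2.
Hypothesis hSN : (#|Sc| <= N)%N.

Definition L := enum Sc ++ enum (~: Sc).

Lemma L_uniq : uniq L.
Proof.
rewrite cat_uniq !enum_uniq /= andbT; apply/hasPn => t.
by rewrite !mem_enum inE.
Qed.

Lemma L_size : size L = (N + N)%N.
Proof. by rewrite size_cat -!cardE cardsC card_ord. Qed.

Lemma L_mem t : t \in L.
Proof. by rewrite mem_cat !mem_enum !inE orbN. Qed.

Definition tgt t := index t L.

Lemma tgt_S t : t \in Sc -> (tgt t < N)%N.
Proof.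
move=> tS; rewrite /tgt index_cat mem_enum tS.
apply: leq_trans hSN; rewrite cardE index_mem mem_enum //.
Qed.

Lemma tgt_nth (k : 'I_(N + N)) : tgt (nth k L k) = k.
Proof. by rewrite /tgt index_uniq // ?L_uniq // L_size. Qed.

Definition z2 (v : V) : R :=
  if own2 v is Some t then
    (if v.1 == ca t then (if (tgt t < N)%N then (tgt t == v.2)%:R else 0)
     else if v.1 == cb t then (if (tgt t < N)%N then 0 else ((tgt t - N)%N == v.2)%:R)
     else 0)
  else 0.

Lemma z2a t i : z2 (ca t, i) = if (tgt t < N)%N then (tgt t == i)%:R else 0.
Proof. by rewrite /z2 (own2_eq _ (ca_pool t)) /= eqxx. Qed.

Lemma z2b t i : z2 (cb t, i) = if t \in Sc then (if (tgt t < N)%N then (tgt t == i)%:R else 0)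
  else (if (tgt t < N)%N then 0 else ((tgt t - N)%N == i)%:R).
Proof.
rewrite /z2 (own2_eq _ (cb_pool t)) /= inE eqxx [cb t == _]eq_sym.
by case: (ca t == cb t).
Qed.

Lemma D2_z2 : D2 z2 != 0.
Proof.
apply: det_neq0_kernel => w H.
have y0 i : w 0 (rshift N i) = 0.
  set k := rshift N i; set t := nth k L k.
  have tk : tgt t = (N + i)%N by rewrite tgt_nth.
  have tN : (tgt t < N)%N = false by rewrite tk ltnNge leq_addr.
  have tS : t \notin Sc by apply/negP => /tgt_S; rewrite tN.
  have := H t; under eq_bigr do rewrite mxE; rewrite rowsum.
  under eq_bigr do rewrite z2a tN mul0r.
  under [X in _ + X]eq_bigr do rewrite z2b (negbTE tS) tN tk addKn mulNr.
  rewrite big1 // add0r sumrN sum_delta => /eqP; rewrite oppr_eq0 => /eqP //.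
have x0 i : w 0 (lshift N i) = 0.
  set k := lshift N i; set t := nth k L k.
  have tk : tgt t = i by rewrite tgt_nth.
  have tN : (tgt t < N)%N by rewrite tk.
  have := H t; under eq_bigr do rewrite mxE; rewrite rowsum.
  under eq_bigr do rewrite z2a tN tk.
  rewrite sum_delta.
  under [X in _ + X]eq_bigr do rewrite z2b tN tk.
  case: (t \in Sc).
    under [X in _ + X]eq_bigr do rewrite mulNr.
    by rewrite sumrN sum_delta y0 oppr0 addr0.
  by rewrite big1 ?addr0 // => j _; rewrite oppr0 mul0r.
apply/matrixP => a j; rewrite (ord1 a) mxE -(splitK j).
by case: (fintype.split j) => i /=; [exact: x0|exact: y0].
Qed.

End case2.

Definition Dc : (V -> R) -> R := if (N <= #|Sc|)%N then D1 else D2.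

Lemma MA_Dc : MA [set: V] Dc.
Proof. rewrite /Dc; case: ifP => h; [exact: MA_D1|exact: MA_D2]. Qed.

Lemma Dc_nz : exists z, Dc z != 0.
Proof.
rewrite /Dc; case: ifP => h.
  by exists z1; rewrite D1_z1 ?oner_neq0.
exists z2; apply: D2_z2; by apply: ltnW; rewrite ltnNge h.
Qed.

Lemma Dc_zero (z : V -> R) (x y : 'I_N -> R) : (exists i, x i != y i) ->
  (forall k : 'I_K, \sum_(i < N) x i * z ((c k).1, i) = \sum_(i < N) y i * z ((c k).2, i)) ->
  Dc z = 0.
Proof.
move=> [i0 xy] H; rewrite /Dc; case: ifP => h.
- apply: (det0_kernel (w := \row_j (x j - y j))).
    apply/negP => /eqP u0; have := congr1 (fun M : 'rV_N => M 0 i0) u0.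
    by rewrite !mxE => /eqP; rewrite subr_eq0 (negbTE xy).
  move=> r; under eq_bigr do rewrite !mxE /E1.
  have hr := rho_S h r; rewrite inE in hr.
  have := H (io (rho r)); rewrite -/(ca (rho r)) -/(cb (rho r)) -(eqP hr) => Hr.
  under eq_bigr do rewrite mulrBr.
  rewrite sumrB; apply/eqP; rewrite subr_eq0; apply/eqP.
  rewrite (eq_bigr (fun j => x j * z (ca (rho r), j))); last by move=> j _; rewrite mulrC.
  by rewrite Hr; apply: eq_bigr => j _; rewrite mulrC.
- apply: (det0_kernel (w := \row_j match fintype.split j with inl i => x i | inr i => y i end)).
    apply/negP => /eqP w0.
    have := congr1 (fun M : 'rV_(N + N) => M 0 (lshift N i0)) w0.
    have := congr1 (fun M : 'rV_(N + N) => M 0 (rshift N i0)) w0.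
    rewrite !mxE split_l split_r => yi xi.
    by rewrite xi yi eqxx in xy.
  move=> t; under eq_bigr do rewrite mxE; rewrite rowsum.
  rewrite (eq_bigr (fun i => x i * z (ca t, i))); last by move=> i _; rewrite ?mxE ?split_l; ring.
  rewrite [X in _ + X](eq_bigr (fun i => - (y i * z (cb t, i)))); last by move=> i _; rewrite ?mxE ?split_r; ring.
  by rewrite sumrN H subrr.
Qed.
End Comb.

Lemma fmax_att (R : realType) (T : finType) (A : {set T}) (v : T -> R) j0 :
  j0 \in A -> exists2 j, j \in A & fmax A v = v j.
Proof.
move=> j0A; rewrite /fmax (bigmax_eq_arg (-oo)%E j0) //; last by move=> i _; rewrite leNye.
exists [arg max_(i > j0 in A) (v i)%:E]%O => //.
by case: arg_maxP.
Qed.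

Lemma negl_seq (R : realType) d (T : measurableType d) (P : probability T R)
  (I : eqType) (s : seq I) (B : I -> set T) :
  (forall i, P.-negligible (B i)) -> P.-negligible [set w | exists2 i, i \in s & B i w].
Proof.
move=> HB; elim: s => [|i s IH].
  by apply: (negligibleS _ (negligible_set0 P)) => w [].
apply: (negligibleS _ (negligibleU (HB i) IH)) => w [j].
rewrite inE => /orP [/eqP -> Bw|js Bw]; [by left|right; by exists j].
Qed.

Unset Implicit Arguments.

Theorem proposition6 (R : realType) (d : measure_display) (T : measurableType d)
  (P : probability T R) (N M K L : nat) (pools : 'I_K -> {set 'I_M})
  (X : 'I_M * 'I_N -> {RV P >-> R}) :
  (0 < L)%N ->
  (forall k, #|pools k| = L) ->
  (forall (k k' : 'I_K) (j : 'I_M), j \in pools k -> j \in pools k' -> k = k') ->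
  (forall j : 'I_M, exists k, j \in pools k) ->
  mutually_independent X ->
  (forall p, std_normal (X p)) ->
  (2 * N + 1 <= K)%N ->
  {ae P, forall w, injective (maxout pools (fun j i => X (j, i) w))}.
Proof.
move=> L0 cardP disj _ indX gX hK.
have NK : (N + N <= K)%N.
  by apply: leq_trans hK; rewrite addnn -mul2n addn1.
pose valid (c : {ffun 'I_K -> 'I_M * 'I_M}) :=
  forall k, ((c k).1 \in pools k) && ((c k).2 \in pools k).
pose B (c : {ffun 'I_K -> 'I_M * 'I_M}) : set T :=
  [set w | valid c /\ Dc NK c (xpt X w) = 0].
have HB c : P.-negligible (B c).
  have [vc|nvc] := pselect (valid c).
    have H1 := MA_Dc R disj NK vc. have H2 := Dc_nz R disj NK vc. have H3 := MA_null indX gX (erefl _) H1 H2.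
    apply: (negligibleS _ H3).
    by move=> w [].
  by apply: (negligibleS _ (negligible_set0 P)) => w [].
apply: (negligibleS _ (negl_seq (enum {ffun 'I_K -> 'I_M * 'I_M}) HB)).
move=> w /= ninj.
have [//|nB] := pselect (exists2 c, c \in enum {ffun 'I_K -> 'I_M * 'I_M} & B c w).
exfalso; apply: ninj => x y Hxy.
apply/funext => i0; apply/eqP/negPn/negP => xy.
apply: nB.
have ex k : exists ab : 'I_M * 'I_M, [/\ ab.1 \in pools k, ab.2 \in pools k &
    \sum_(i < N) x i * X (ab.1, i) w = \sum_(i < N) y i * X (ab.2, i) w].
  have : (0 < #|pools k|)%N by rewrite cardP.
  rewrite card_gt0 => /set0Pn [j0 j0k].
  have [a ak Ha] := fmax_att (fun j => inner x (fun i => X (j, i) w)) j0k.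
  have [b bk Hb] := fmax_att (fun j => inner y (fun i => X (j, i) w)) j0k.
  exists (a, b); split => //=.
  have := congr1 (fun F => F k) Hxy; rewrite /maxout Ha Hb /inner.
  by [].
have [u Hu] := fin_all_exists ex.
exists [ffun k => u k]; first by rewrite mem_enum.
have vc : valid [ffun k => u k].
  by move=> k; rewrite ffunE; have [-> -> _] := Hu k.
split => //.
apply: (Dc_zero NK (x := x) (y := y)); first by exists i0.
move=> k; rewrite ffunE; have [_ _ ->] := Hu k.
by [].
Qed.
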